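(* Let $D$ be an associative division algebra finite-dimensional over its center $F$, let $\sigma\in\mathrm{Aut}(D)$ be such that $\sigma|_F$ has finite order $m$, let $F_0=\mathrm{Fix}(\sigma)\cap F$, and let $A=(D,\sigma,d)$ with $d\in D\setminus F_0$. Then every automorphism of $A$ of the form $H_{\mathrm{id},k}$ ($k\in F^\times$, $N_{F/F_0}(k)=1$) is an inner automorphism $G_c(\sum_{i=0}^{m-1}a_it^i)=(c^{-1}\sum_{i=0}^{m-1}a_it^i)c$ for some $c\in F^\times$ satisfying $k=\sigma(c)c^{-1}$.
   Context: $N_{F/F_0}$ is the norm of the cyclic Galois extension $F/F_0$. $D[t;\sigma]$ is the twisted polynomial ring: polynomials $\sum a_it^i$ ($a_i\in D$), multiplication determined by $ta=\sigma(a)t$. For $d\in D^\times$, $(D,\sigma,d)$ is the set of polynomials of degree $<m$ in $D[t;\sigma]$ with multiplication (used in the formula for $G_c$) $g\circ h=$ remainder of $gh$ on right division by $t^m-d$; it is a unital algebra over $F_0$ containing $D$. For $k\in F^\times$, $H_{\mathrm{id},k}(\sum_{i=0}^{m-1}a_it^i)=a_0+\sum_{i=1}^{m-1}a_i\big(\prod_{l=0}^{i-1}\sigma^l(k)\big)t^i$. *)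

(* Defs.v *)
From HB Require Import structures.
From mathcomp Require Import all_boot all_order all_algebra all_field.
Set Implicit Arguments. Unset Strict Implicit. Unset Printing Implicit Defensive.
Import GRing.Theory.
Local Open Scope ring_scope.

(* Elements of A = (D, sigma, d): polynomials sum_{i<m} a_i t^i, encoded by
   their coefficient function 'I_m -> D. *)

(* Multiplication of A: remainder of the product g h in D[t;sigma] on right
   division by t^m - d.  Since (a t^i)(b t^j) = a sigma^i(b) t^(i+j) and
   c t^(m+r) = c sigma^r(d) t^r + (c t^r)(t^m - d), the remainder is: *)
Definition cyc_mul (D : nzRingType) (sigma : D -> D) (d : D) (m : nat)
    (g h : 'I_m -> D) : 'I_m -> D :=
  fun r => \sum_(i < m) \sum_(j < m)
     (if (i + j == r)%N then g i * iter i sigma (h j)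
      else if (i + j == r + m)%N then g i * iter i sigma (h j) * iter r sigma d
      else 0).

Definition cyc_cst (D : nzRingType) (m : nat) (a : D) : 'I_m -> D :=
  fun i => if (val i == 0)%N then a else 0.

Definition H_id (D : nzRingType) (sigma : D -> D) (m : nat) (k : D)
    (x : 'I_m -> D) : 'I_m -> D :=
  fun i => x i * \prod_(l < i) iter l sigma k.

Definition G_inner (D : unitRingType) (sigma : D -> D) (d : D) (m : nat) (c : D)
    (x : 'I_m -> D) : 'I_m -> D :=
  cyc_mul sigma d (cyc_mul sigma d (@cyc_cst D m c^-1) x) (@cyc_cst D m c).

(* f is an automorphism of the F_0-algebra A = (D, sigma, d), where
   F_0 = { a in F | sigma a = a } and F is embedded in D via a |-> a%:A. *)
Definition is_cyc_aut (F : fieldType) (D : falgType F) (sigma : D -> D) (d : D)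
    (m : nat) (f : ('I_m -> D) -> ('I_m -> D)) : Prop :=
  [/\ bijective f,
      (forall x y i, f (fun j => x j + y j) i = f x i + f y i),
      (forall x y i, f (cyc_mul sigma d x y) i = cyc_mul sigma d (f x) (f y) i),
      (forall i, f (@cyc_cst D m 1) i = @cyc_cst D m 1 i) &
      (forall (a : F), sigma a%:A = a%:A ->
         forall x i, f (fun j => a%:A * x j) i = a%:A * f x i)].

(* Norm N_{F/F_0}(k) = prod_{l<m} sigma^l(k) (Gal(F/F_0) = <sigma|_F>, order m) *)
Definition cyc_norm (D : nzRingType) (sigma : D -> D) (m : nat) (k : D) : D :=
  \prod_(l < m) iter l sigma k.

(* Main.v *)
Require Import Defs.
From HB Require Import structures.
From mathcomp Require Import all_boot all_order all_algebra all_field.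
From mathcomp Require Import ring zify.
Import GRing.Theory.
Local Open Scope ring_scope.
From Stdlib Require Import Classical.

Lemma artin (F : fieldType) n : forall (a : nat -> F) (f : nat -> F -> F),
 (forall i x y, f i (x*y) = f i x * f i y) -> (forall i, f i 1 = 1) ->
 (forall i j, (i < j < n)%N -> exists y, f i y != f j y) ->
 (forall x, \sum_(i < n) a i * f i x = 0) -> forall i, (i < n)%N -> a i = 0.
Proof.
elim: n => [//|n IH] a f fM f1 fD H.
have Hs z : \sum_(i < n) a i * f i z = - (a n * f n z).
  by have := H z; rewrite big_ord_recr /= => /eqP; rewrite addr_eq0 => /eqP.
have Hlt : forall j, (j < n)%N -> a j = 0.
  move=> j jn.
  have [y Hy] := fD j n (introT andP (conj jn (ltnSn n))).
  have Hj : a j * (f j y - f n y) = 0.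
    apply: (IH (fun i => a i * (f i y - f n y)) f fM f1 _ _ j jn).
      move=> i k /andP[ik kn]; apply: fD; rewrite ik /=; exact: ltnW.
    move=> x.
    have -> : \sum_(i < n) a i * (f i y - f n y) * f i x =
       \sum_(i < n) a i * f i (y * x) - f n y * \sum_(i < n) a i * f i x.
      rewrite mulr_sumr -sumrB; apply: eq_bigr => i _; rewrite fM; ring.
    rewrite !Hs fM; ring.
  by move/eqP: Hj; rewrite mulf_eq0 subr_eq0 (negbTE Hy) orbF => /eqP.
move=> i; rewrite ltnS leq_eqVlt => /orP[/eqP ->|]; last exact: Hlt.
have := H 1; rewrite big_ord_recr /= big1 ?add0r ?f1 ?mulr1 // => k _.
by rewrite Hlt ?mul0r.
Qed.

Lemma iter_rm0 (D : nzRingType) (sigma : {rmorphism D -> D}) i :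
  iter i sigma 0 = 0.
Proof. by elim: i => //= i ->; rewrite rmorph0. Qed.

Lemma cst_mul_l (D : nzRingType) (sigma : {rmorphism D -> D}) d m u x (r : 'I_m) :
  cyc_mul sigma d (@cyc_cst D m u) x r = u * x r.
Proof.
have m0 : (0 < m)%N by case: r => [r' ?]; apply: leq_ltn_trans (leq0n r') _.
pose i0 : 'I_m := Ordinal m0.
rewrite /cyc_mul (bigD1 i0) //= [X in _ + X]big1 ?addr0; last first.
  move=> i ni; apply: big1 => j _.
  have -> : @cyc_cst D m u i = 0.
    rewrite /cyc_cst; case: eqP => // h; case/eqP: ni; exact: val_inj.
  by rewrite !mul0r; case: ifP => //; case: ifP.
rewrite /cyc_cst /= ?eqxx (bigD1 r) //= [X in _ + X]big1 ?addr0 ?add0n ?eqxx //.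
move=> j nj; rewrite add0n ifN; last by apply/negP => /eqP h; case/eqP: nj; exact: val_inj.
by rewrite ifN //; apply/negP => /eqP h; have := ltn_ord j; lia.
Qed.

Lemma cst_mul_r (D : nzRingType) (sigma : {rmorphism D -> D}) d m v x (r : 'I_m) :
  cyc_mul sigma d x (@cyc_cst D m v) r = x r * iter r sigma v.
Proof.
have m0 : (0 < m)%N by case: r => [r' ?]; apply: leq_ltn_trans (leq0n r') _.
pose i0 : 'I_m := Ordinal m0.
have cst0 j : j != i0 -> @cyc_cst D m v j = 0.
  move=> nj; rewrite /cyc_cst; case: eqP => // h; case/eqP: nj; exact: val_inj.
rewrite /cyc_mul (bigD1 r) //= [X in _ + X]big1 ?addr0; last first.
  move=> i ni; rewrite (bigD1 i0) //= [X in _ + X]big1 ?addr0; last first.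
    by move=> j nj; rewrite cst0 // iter_rm0 mulr0 !mul0r; case: ifP => //; case: ifP.
  rewrite addn0 ifN; last by apply/negP => /eqP h; case/eqP: ni; exact: val_inj.
  by rewrite ifN //; apply/negP => /eqP h; have := ltn_ord i; lia.
rewrite (bigD1 i0) //= [X in _ + X]big1 ?addr0; last first.
  by move=> j nj; rewrite cst0 // iter_rm0 mulr0 !mul0r; case: ifP => //; case: ifP.
by rewrite addn0 eqxx /cyc_cst /= ?eqxx.
Qed.

Theorem proposition3p4 (F : fieldType) (D : falgType F)
  (sigma : {rmorphism D -> D}) (m : nat) (d : D) (k : F) :
  (forall x : D, x != 0 -> x \is a GRing.unit) ->
  (forall x : D, (forall y : D, x * y = y * x) -> exists a : F, x = a%:A) ->
  bijective sigma ->
  (0 < m)%N ->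
  (forall a : F, iter m sigma a%:A = a%:A) ->
  (forall n : nat, (0 < n < m)%N -> exists a : F, iter n sigma a%:A != a%:A) ->
  ~ (exists a : F, d = a%:A /\ sigma a%:A = a%:A) ->
  k != 0 ->
  cyc_norm sigma m k%:A = 1 ->
  is_cyc_aut sigma d (@H_id D sigma m k%:A) ->
  exists c : F, [/\ c != 0,
    k%:A = sigma c%:A * (c%:A)^-1 &
    forall (x : 'I_m -> D) (i : 'I_m),
      H_id sigma k%:A x i = G_inner sigma d c%:A x i].
Proof.
move=> Hunit Hcent [sinv sK sKinv] m0 Hm Hord _ k0 Hnorm _.
have injA : injective (fun a : F => a%:A : D).
  move=> a b /eqP; rewrite -subr_eq0 -scalerBl scaler_eq0 oner_eq0 orbF subr_eq0.
  by move/eqP.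
have Hc' a : exists b : F, sigma a%:A == b%:A.
  have [b ->] : exists b : F, sigma a%:A = b%:A.
    apply: Hcent => y; rewrite -(sKinv y) -!rmorphM.
    by rewrite mulr_algl mulr_algr.
  by exists b.
pose tau a := xchoose (Hc' a).
have tauE a : (tau a)%:A = sigma a%:A by rewrite (eqP (xchooseP (Hc' a))).
have algM (a b : F) : (a * b)%:A = a%:A * b%:A :> D by rewrite -scalerA mulr_algl.
have algD (a b : F) : (a + b)%:A = a%:A + b%:A :> D by rewrite scalerDl.
have alg1 : 1%:A = 1 :> D by rewrite scale1r.
have alg0 : 0%:A = 0 :> D by rewrite scale0r.
have tauM a b : tau (a * b) = tau a * tau b.
  by apply: injA; rewrite /= tauE !algM !tauE rmorphM.
have tauD a b : tau (a + b) = tau a + tau b.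
  by apply: injA; rewrite /= tauE !algD !tauE rmorphD.
have tau1 : tau 1 = 1 by apply: injA; rewrite /= tauE !alg1 rmorph1.
have tau0 : tau 0 = 0 by apply: injA; rewrite /= tauE !alg0 rmorph0.
have tauI : injective tau.
  by move=> a b /(congr1 (fun a : F => a%:A : D)); rewrite /= !tauE => /(can_inj sK)/injA.
have iterE i a : (iter i tau a)%:A = iter i sigma a%:A.
  by elim: i => //= i IH; rewrite tauE IH.
have itM i a b : iter i tau (a * b) = iter i tau a * iter i tau b.
  by elim: i => //= i ->; rewrite tauM.
have it1 i : iter i tau 1 = 1 by elim: i => //= i ->.
have itI i : injective (iter i tau) by elim: i => //= i IH a b /tauI /IH.
pose P i := \prod_(l < i) iter l tau k.
have algP (i : nat) : (P i)%:A = \prod_(l < i) iter l sigma k%:A :> D.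
  rewrite (big_morph (fun a : F => a%:A : D) algM alg1).
  by apply: eq_bigr => l _; rewrite iterE.
have Pm : P m = 1 by apply: injA; rewrite /= algP alg1; exact: Hnorm.
have PS i : P i.+1 = k * tau (P i).
  by rewrite /P big_ord_recl (big_morph tau tauM tau1).
have itm a : iter m tau a = a by apply: injA; rewrite /= iterE Hm.
have fD : forall i j, (i < j < m)%N -> exists y, iter i tau y != iter j tau y.
  move=> i j /andP[ij jm].
  have [a Ha] := Hord (j - i)%N ltac:(lia).
  exists a; apply/negP => /eqP h.
  move: h; rewrite -(subnKC (ltnW ij)) iterD => /itI h.
  by move: Ha; rewrite -iterE -h eqxx.
have [y Hy] : exists y, \sum_(i < m) P i * iter i tau y != 0.
  apply: NNPP => Hn.
  have Hr : forall x, \sum_(i < m) P i * iter i tau x = 0.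
    move=> x.
    by case: (eqVneq (\sum_(i < m) P i * iter i tau x) 0) => // ne; case: Hn; exists x.
  have := @artin F m P (fun i => iter i tau) itM it1 fD Hr 0%N m0.
  by rewrite /P big_ord0 => /eqP; rewrite oner_eq0.
pose g i := P i * iter i tau y.
have Hb : k * tau (\sum_(i < m) g i) = \sum_(i < m) g i.
  rewrite (big_morph tau tauD tau0) mulr_sumr.
  have -> : \sum_(i < m) k * tau (g i) = \sum_(i < m) g i.+1.
    by apply: eq_bigr => i _; rewrite /g tauM mulrA -PS.
  have gm : g m = g 0%N by rewrite /g Pm itm /P big_ord0.
  move: gm; rewrite -(prednK m0) => gm.
  rewrite big_ord_recr big_ord_recl /= gm addrC; congr (_ + _).
have b0 : \sum_(i < m) g i != 0 by exact: Hy.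
move: Hb b0; set b := \sum_(i < m) g i => Hb b0.
have tb0 : tau b != 0.
  by apply: contraNneq b0 => h; rewrite -Hb h mulr0.
have tc : tau b^-1 = (tau b)^-1.
  by apply/esym/mulr1_eq; rewrite -tauM mulfV // tau1.
have kc : k * b^-1 = tau b^-1.
  by rewrite tc -[in LHS]Hb invfM mulrA mulfV ?mul1r.
have PC i : P i * b^-1 = iter i tau b^-1.
  elim: i => [|i IH]; first by rewrite /P big_ord0 mul1r.
  rewrite /P big_ord_recr /= mulrAC IH -itM mulrC kc.
  by rewrite -iterSr.
have comm (z : D) (a : F) : z * a%:A = a%:A * z by rewrite mulr_algl mulr_algr.
have cu : ((b^-1)%:A : D) \is a GRing.unit.
  by apply: Hunit; rewrite -alg0 (inj_eq injA) invr_eq0.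
exists b^-1; split.
- by rewrite invr_eq0.
- by rewrite -tauE -kc algM mulrK.
move=> x i.
rewrite /H_id /G_inner cst_mul_r cst_mul_l -iterE -PC algM -algP.
rewrite -[RHS]mulrA.
have -> : x i * ((P i)%:A * (b^-1)%:A) = (b^-1)%:A * (x i * (P i)%:A).
  by rewrite mulrA comm.
by rewrite mulKr.
Qed.
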